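(* Let $r\ge 3$ and let $\mathcal H=(V,E)$ be an $r$-uniform bi-hypergraph. Suppose $V$ has a partition $V_1,\dots,V_k$ such that each $V_i$ is an independent set of $\mathcal H$, and for each edge $e\in E$ there are indices $i_1,\dots,i_q\in[k]$ with $q<r$ and $e\subseteq V_{i_1}\cup\dots\cup V_{i_q}$. Then $\mathcal H$ is colorable.
   Context: A bi-hypergraph $\mathcal H=(V,E)$ consists of a finite vertex set $V$ and a set $E$ of subsets of $V$, called edges, with no edge contained in another. It is $r$-uniform if every edge has exactly $r$ elements. A set $S\subseteq V$ is independent if no edge of $\mathcal H$ is contained in $S$. A mapping $f:V\to\mathbb N$ is a proper coloring of $\mathcal H$ if $1<|f(e)|<|e|$ for every $e\in E$, where $f(e)=\{f(v):v\in e\}$. $\mathcal H$ is colorable if it has a proper coloring. $[k]=\{1,\dots,k\}$. *)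

(* Defs.v *)
From mathcomp Require Import all_boot.
Set Implicit Arguments. Unset Strict Implicit. Unset Printing Implicit Defensive.

Definition bihypergraph (V : finType) (E : {set {set V}}) : Prop :=
  forall e1 e2, e1 \in E -> e2 \in E -> e1 \subset e2 -> e1 = e2.

Definition uniform (V : finType) (r : nat) (E : {set {set V}}) : Prop :=
  forall e, e \in E -> #|e| = r.

Definition independent (V : finType) (E : {set {set V}}) (S : {set V}) : Prop :=
  forall e, e \in E -> ~~ (e \subset S).

Definition color_image (V : finType) (f : V -> nat) (e : {set V}) : seq nat :=
  undup [seq f v | v <- enum e].

Definition proper_coloring (V : finType) (E : {set {set V}}) (f : V -> nat) : Prop :=
  forall e, e \in E -> 1 < size (color_image f e) < #|e|.

Definition colorable (V : finType) (E : {set {set V}}) : Prop :=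
  exists f : V -> nat, proper_coloring E f.

(* Main.v *)
Require Import Defs.
From mathcomp Require Import all_boot.

Theorem mainTheorem6 (V : finType) (E : {set {set V}}) (r k : nat)
    (P : V -> 'I_k) :
  3 <= r ->
  bihypergraph E ->
  uniform r E ->
  (forall i : 'I_k, independent E [set v | P v == i]) ->
  (forall e, e \in E -> exists Q : {set 'I_k},
       #|Q| < r /\ e \subset \bigcup_(i in Q) [set v | P v == i]) ->
  colorable E.
Proof.
move=> hr _ hu hind hcov.
exists (fun v => nat_of_ord (P v)) => e he.
rewrite /color_image (hu e he).
apply/andP; split.
  have : 0 < #|e| by rewrite (hu e he); apply: leq_trans hr.
  case/card_gt0P => x xe.
  have xin : val (P x) \in undup [seq nat_of_ord (P v) | v <- enum e].
    by rewrite mem_undup; apply/mapP; exists x; rewrite ?mem_enum.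
  case Hs: (undup _) xin => [|c [|d s]] //= xin.
  have /negP hn := hind (P x) e he; exfalso; apply: hn.
  apply/subsetP => y ye; rewrite inE.
  have : val (P y) \in undup [seq nat_of_ord (P v) | v <- enum e].
    by rewrite mem_undup; apply/mapP; exists y; rewrite ?mem_enum.
  rewrite Hs !inE in xin * => /eqP yc.
  by move: xin; rewrite -yc => /eqP /val_inj ->.
have [Q [hQ hsub]] := hcov e he.
apply: leq_ltn_trans hQ.
rewrite cardE -(size_map val (enum Q)).
apply: uniq_leq_size; first exact: undup_uniq.
move=> n; rewrite mem_undup => /mapP [y]; rewrite mem_enum => ye ->.
move/subsetP: hsub => /(_ y ye) /bigcupP [i iQ]; rewrite inE => /eqP ->.
by apply/mapP; exists i; rewrite ?mem_enum.
Qed.
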